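(* Let $k\geq 2$ and $r\geq 2$ be integers, and let $z_1,\dots,z_k\in\mathbb{C}_+:=\{z\in\mathbb{C}:\Re(z)\geq 0\}$ be nonzero and satisfy $\sum_{i=1}^k z_i^r=0$. Then $$\max_{i=1,\dots,k}\mathrm{Arg}(z_i)-\min_{i=1,\dots,k}\mathrm{Arg}(z_i)\geq\frac{\pi}{r}.$$
   Context: $\mathrm{Arg}$ denotes the principal value of the argument of a nonzero complex number. *)

(* Defs.v *)
From Stdlib Require Import Reals List.
From Coquelicot Require Import Coquelicot.
Open Scope R_scope.

(* Principal value of the argument, in (-PI, PI]; Arg 0 := 0 (irrelevant
   for the theorem, which only uses nonzero arguments). *)
Definition Arg (z : C) : R :=
  let x := Re z in let y := Im z in
  if Rlt_dec 0 x then atan (y / x)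
  else if Rlt_dec x 0 then
    (if Rle_dec 0 y then atan (y / x) + PI else atan (y / x) - PI)
  else
    (if Rlt_dec 0 y then PI / 2
     else if Rlt_dec y 0 then - (PI / 2) else 0).

Definition maxR (k : nat) (a : nat -> R) : R :=
  fold_right Rmax (a 0%nat) (map a (seq 0 k)).
Definition minR (k : nat) (a : nat -> R) : R :=
  fold_right Rmin (a 0%nat) (map a (seq 0 k)).

(* Main.v *)
Require Import Defs.
From Stdlib Require Import Reals List Lra Psatz.
From Coquelicot Require Import Coquelicot.
Open Scope R_scope.

Lemma polar (x y : R) : 0 <= x -> (x, y) <> RtoC 0 ->
  0 < sqrt (x^2 + y^2) /\
  x = sqrt (x^2 + y^2) * cos (Arg (x, y)) /\
  y = sqrt (x^2 + y^2) * sin (Arg (x, y)).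
Proof.
  intros Hx Hz.
  assert (Hne : x <> 0 \/ y <> 0).
  { destruct (Req_dec x 0); destruct (Req_dec y 0); subst; auto.
  }
  assert (Hp : 0 < x^2 + y^2).
  { destruct Hne; [assert (0 < x^2) by (apply pow2_gt_0; auto) |
                   assert (0 < y^2) by (apply pow2_gt_0; auto)];
    pose proof (pow2_ge_0 x); pose proof (pow2_ge_0 y); lra. }
  split; [apply sqrt_lt_R0; auto|].
  unfold Arg, Re, Im; cbn [fst snd].
  destruct (Rlt_dec 0 x) as [Hx0|Hx0].
  - rewrite cos_atan, sin_atan.
    assert (E : sqrt (x^2+y^2) = x * sqrt (1 + (y/x)²)).
    { replace (x^2+y^2) with ((x*x) * (1 + (y/x)²)) by (unfold Rsqr; field; apply Rgt_not_eq; lra).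
      rewrite sqrt_mult, sqrt_square; try (pose proof (Rle_0_sqr (y/x)); nra).  }
    assert (0 < sqrt (1 + (y/x)²)).
    { apply sqrt_lt_R0. pose proof (Rle_0_sqr (y/x)); lra. }
    rewrite E; split; field; try split; apply Rgt_not_eq; lra.
  - assert (x = 0) by lra. subst x.
    destruct (Rlt_dec 0 0); [lra|].
    destruct Hne as [H|H]; [lra|].
    replace (0^2 + y^2) with (y*y) by ring.
    destruct (Rlt_dec 0 y).
    + rewrite sqrt_square by lra. rewrite cos_PI2, sin_PI2. split; ring.
    + destruct (Rlt_dec y 0); [|lra].
      replace (y*y) with ((-y)*(-y)) by ring.
      rewrite sqrt_square by lra. rewrite cos_neg, sin_neg, cos_PI2, sin_PI2.
      split; ring.
Qed.

Lemma demoivre (rho t : R) (n : nat) :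
  Cpow (rho * cos t, rho * sin t) n = (rho ^ n * cos (INR n * t), rho ^ n * sin (INR n * t)).
Proof.
  induction n as [|n IH].
  - simpl. rewrite Rmult_0_l, cos_0, sin_0. unfold RtoC. apply (f_equal2 pair); simpl; ring.
  - cbn [Cpow]. rewrite IH. unfold Cmult, Re, Im; cbn [fst snd].
    rewrite S_INR, Rmult_plus_distr_r, Rmult_1_l, cos_plus, sin_plus.
    apply (f_equal2 pair); simpl; ring.
Qed.

Lemma sum_Re (f : nat -> C) n : Re (sum_n f n) = sum_n (fun i => Re (f i)) n.
Proof.
  induction n as [|n IH].
  - rewrite !sum_O. reflexivity.
  - rewrite !sum_Sn. rewrite <- IH. reflexivity.
Qed.

Lemma sum_Im (f : nat -> C) n : Im (sum_n f n) = sum_n (fun i => Im (f i)) n.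
Proof.
  induction n as [|n IH].
  - rewrite !sum_O. reflexivity.
  - rewrite !sum_Sn. rewrite <- IH. reflexivity.
Qed.

Lemma sum_lin (a b : R) (u v : nat -> R) n :
  sum_n (fun i => a * u i + b * v i) n = a * sum_n u n + b * sum_n v n.
Proof.
  induction n as [|n IH].
  - rewrite !sum_O. reflexivity.
  - rewrite !sum_Sn. rewrite IH. unfold plus; simpl. ring.
Qed.

Lemma sum_pos (g : nat -> R) n : (forall i, (i <= n)%nat -> 0 < g i) -> 0 < sum_n g n.
Proof.
  induction n as [|n IH]; intros H.
  - rewrite sum_O. apply H; lia.
  - rewrite sum_Sn. unfold plus; simpl.
    assert (0 < sum_n g n) by (apply IH; intros; apply H; lia).
    assert (0 < g (S n)) by (apply H; lia). lra.
Qed.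

Lemma fold_min_le (l : list R) d x : In x l -> fold_right Rmin d l <= x.
Proof.
  induction l as [|a l IH]; simpl; [tauto|].
  intros [<-|H]; [apply Rmin_l|].
  eapply Rle_trans; [apply Rmin_r|auto].
Qed.

Lemma fold_max_ge (l : list R) d x : In x l -> x <= fold_right Rmax d l.
Proof.
  induction l as [|a l IH]; simpl; [tauto|].
  intros [<-|H]; [apply Rmax_l|].
  eapply Rle_trans; [apply IH; auto|apply Rmax_r].
Qed.

Lemma in_range (k : nat) (a : nat -> R) i : (i < k)%nat -> In (a i) (map a (seq 0 k)).
Proof. intros H. apply in_map. apply in_seq. lia. Qed.

(* z_1, ..., z_k are represented as z 0, ..., z (k-1). *)
Theorem lemma2p2 (k r : nat) (z : nat -> C) :
  (2 <= k)%nat -> (2 <= r)%nat ->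
  (forall i, (i < k)%nat -> 0 <= Re (z i) /\ z i <> RtoC 0) ->
  sum_n (fun i => Cpow (z i) r) (k - 1) = RtoC 0 ->
  maxR k (fun i => Arg (z i)) - minR k (fun i => Arg (z i)) >= PI / INR r.
Proof.
  intros Hk Hr Hz Hs.
  set (M := maxR k (fun i => Arg (z i))).
  set (m := minR k (fun i => Arg (z i))).
  assert (HR : 0 < INR r) by (apply lt_0_INR; lia).
  apply Rnot_lt_ge; intro Hlt.
  assert (Hlt' : INR r * (M - m) < PI).
  { apply (Rmult_lt_compat_l (INR r)) in Hlt; auto.
    replace (INR r * (PI / INR r)) with PI in Hlt by (field; apply Rgt_not_eq; lra). exact Hlt. }
  set (c := INR r * (M + m) / 2).
  set (g := fun i => cos c * Re (Cpow (z i) r) + sin c * Im (Cpow (z i) r)).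
  assert (Hsum : sum_n g (k - 1) = 0).
  { unfold g. rewrite (sum_lin (cos c) (sin c) (fun i => Re (Cpow (z i) r))
                         (fun i => Im (Cpow (z i) r))).
    rewrite <- sum_Re, <- sum_Im, Hs. simpl. ring. }
  assert (Hpos : 0 < sum_n g (k - 1)).
  { apply sum_pos. intros i Hi.
    assert (Hik : (i < k)%nat) by lia.
    destruct (Hz i Hik) as [H1 H2].
    assert (Hm : m <= Arg (z i)) by (apply fold_min_le, (in_range k (fun i => Arg (z i))); auto).
    assert (HM : Arg (z i) <= M) by (apply fold_max_ge, (in_range k (fun i => Arg (z i))); auto).
    unfold g. destruct (z i) as [x y] eqn:Ezi. simpl in H1.
    destruct (polar x y H1 H2) as [Hrho [Ex Ey]].
    set (rho := sqrt (x^2+y^2)) in *. set (t := Arg (x, y)) in *.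
    rewrite Ex, Ey, demoivre. simpl.
    replace (cos c * (rho ^ r * cos (INR r * t)) + sin c * (rho ^ r * sin (INR r * t)))
      with (rho ^ r * cos (INR r * t - c)) by (rewrite cos_minus; ring).
    apply Rmult_lt_0_compat; [apply pow_lt; auto|].
    apply cos_gt_0; unfold c; nra. }
  lra.
Qed.
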